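(* For every $n\ge 3$, the local metric dimension of the convex polytope graph $U_n$ is $lmd(U_n)=2$.
   Context: For $n\ge 3$, $U_n$ is the graph with vertex set $\{a_i,b_i,c_i,d_i,e_i : 1\le i\le n\}$ and edge set $\{a_ia_{i+1}, b_ib_{i+1}, e_ie_{i+1}, a_ib_i, b_ic_i, c_id_i, d_ie_i, c_{i+1}d_i : 1\le i\le n\}$, indices taken modulo $n$. A vertex $w$ resolves $u,v$ if $d(u,w)\neq d(v,w)$ ($d$ the graph distance). A set $W$ is a local resolving set if every two adjacent vertices are resolved by some element of $W$; $lmd(G)$ is the minimum cardinality of a local resolving set of $G$. *)

(* Defs.v *)
From mathcomp Require Import all_boot all_order.
Set Implicit Arguments. Unset Strict Implicit. Unset Printing Implicit Defensive.

Section Graphs.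
Variable T : finType.
Variable e : rel T.

Fixpoint ball (k : nat) (u : T) : {set T} :=
  match k with
  | 0 => [set u]
  | k'.+1 => let S := ball k' u in
             S :|: [set y | [exists x in S, e x y]]
  end.

(* graph distance: least k with v in ball k u; equals #|T| ("infinity")
   when v is unreachable from u (never happens in a connected graph). *)
Definition gdist (u v : T) : nat :=
  find (fun k => v \in ball k u) (iota 0 #|T|).

Definition resolves (w u v : T) : bool := gdist u w != gdist v w.

Definition local_resolving (W : {set T}) : bool :=
  [forall u, forall v, e u v ==> [exists w in W, resolves w u v]].

Definition lmd : nat :=
  \big[minn/#|T|]_(W : {set T} | local_resolving W) #|W|.
End Graphs.

(* The convex polytope graph U_n.  Vertex (k, i) with k : 'I_5 encodes
   k = 0,1,2,3,4 <-> a_i, b_i, c_i, d_i, e_i (indices 0..n-1, mod n). *)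
Definition Uvert (n : nat) := ('I_5 * 'I_n)%type.

Definition Uarc (n : nat) (x y : Uvert n) : bool :=
  let kx := val x.1 in let ky := val y.1 in
  let i := val x.2 in let j := val y.2 in
  [|| [&& kx == 0, ky == 0 & j == i.+1 %% n]
    , [&& kx == 1, ky == 1 & j == i.+1 %% n]
    , [&& kx == 4, ky == 4 & j == i.+1 %% n]
    , [&& kx == 0, ky == 1 & j == i]
    , [&& kx == 1, ky == 2 & j == i]
    , [&& kx == 2, ky == 3 & j == i]
    , [&& kx == 3, ky == 4 & j == i]
    | [&& kx == 3, ky == 2 & j == i.+1 %% n]].

Definition Uadj (n : nat) : rel (Uvert n) := fun x y => Uarc x y || Uarc y x.

(* Main.v *)
Require Import Defs.
From mathcomp Require Import all_boot all_order.
From mathcomp Require Import zify.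
Set Implicit Arguments. Unset Strict Implicit. Unset Printing Implicit Defensive.

Section Gen.
Variable T : finType.
Variable e : rel T.

Lemma ballS k u : ball e k u \subset ball e k.+1 u.
Proof. by rewrite /= subsetUl. Qed.

Lemma ball_mono k l u : k <= l -> ball e k u \subset ball e l u.
Proof.
move=> /subnK <-; elim: (l - k) => [|m IH]; first by rewrite add0n subxx.
by rewrite addSn (subset_trans IH (ballS _ _)).
Qed.

Lemma ball_shift k u y : e u y -> ball e k y \subset ball e k.+1 u.
Proof.
move=> euy; elim: k => [|k IH].
  apply/subsetP=> z; rewrite inE => /eqP ->.
  by rewrite /= !inE; apply/orP; right; apply/existsP; exists u; rewrite inE eqxx.
apply/subsetP=> z; rewrite /= [in X in X -> _]inE => /orP [zb|].
  by rewrite inE (subsetP IH z zb).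
rewrite inE => /existsP [x /andP [xb exz]].
rewrite inE; apply/orP; right; rewrite inE; apply/existsP; exists x.
by rewrite (subsetP IH x xb).
Qed.

Lemma ball_lip (f : T -> nat) :
  (forall z x, e z x -> f z <= (f x).+1) ->
  forall k u x, x \in ball e k u -> f u <= f x + k.
Proof.
move=> Hl; elim=> [|k IH] u x /=.
  by rewrite inE => /eqP ->; rewrite addn0.
rewrite inE => /orP [xb|]; first by rewrite addnS ltnW // ltnS IH.
rewrite inE => /existsP [z /andP [zb ezx]].
have := IH _ _ zb; have := Hl _ _ ezx; lia.
Qed.

Lemma find_iota_eq (P : pred nat) N m :
  m < N -> P m -> (forall k, k < m -> ~~ P k) -> find P (iota 0 N) = m.
Proof.
move=> mN Pm Hlt.
have hasP' : has P (iota 0 N) by apply/hasP; exists m; rewrite ?mem_iota //.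
have Pj := nth_find 0 hasP'; rewrite nth_iota ?add0n in Pj; last by move: hasP'; rewrite has_find size_iota.
case: (ltngtP (find P (iota 0 N)) m) => // [jm|mj].
  by have := Hlt _ jm; rewrite Pj.
have := before_find 0 mj; rewrite nth_iota ?add0n ?Pm //; lia.
Qed.

Lemma find_iota_le (P : pred nat) N m :
  m < N -> P m -> find P (iota 0 N) <= m.
Proof.
move=> mN Pm; rewrite leqNgt; apply/negP=> mj.
by have := before_find 0 mj; rewrite nth_iota ?add0n ?Pm //; lia.
Qed.

Lemma find_iota_size (P : pred nat) N : find P (iota 0 N) <= N.
Proof. by rewrite -{2}(size_iota 0 N) find_size. Qed.

Lemma gdist_char (w : T) (f : T -> nat) :
  (forall z x, e z x -> f z <= (f x).+1) ->
  f w = 0 -> (forall x, f x = 0 -> x = w) ->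
  (forall x, 0 < f x -> exists y, e x y /\ (f y).+1 = f x) ->
  (forall x, f x < #|T|) ->
  forall u, gdist e u w = f u.
Proof.
move=> Hl Hw H0 Hd Hb u.
have Hin : forall m x, f x = m -> w \in ball e m x.
  elim=> [|m IH] x fx; first by rewrite (H0 _ fx) /= inE.
  have [y [exy fy]] := Hd x (ltac:(by rewrite fx)).
  apply: (subsetP (ball_shift m exy)); apply: IH; lia.
apply: find_iota_eq; first exact: Hb.
  exact: Hin.
move=> k kl; apply/negP=> wb; have := ball_lip Hl wb.
lia.
Qed.

Lemma gdist_adj (u v w : T) : e u v -> gdist e u w <= (gdist e v w).+1.
Proof.
move=> euv; rewrite /gdist.
set g := find (fun k => w \in ball e k v) (iota 0 #|T|).
case: (ltnP g #|T|) => gT; last first.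
  by apply: leq_trans (find_iota_size _ _) _; apply: leqW.
have hasP' : has (fun k => w \in ball e k v) (iota 0 #|T|).
  by rewrite has_find size_iota.
have Pg := nth_find 0 hasP'; rewrite nth_iota ?add0n -/g in Pg; last by [].
have Pu : w \in ball e g.+1 u := subsetP (ball_shift g euv) _ Pg.
case: (ltnP g.+1 #|T|) => g1.
  exact: find_iota_le g1 Pu.
exact: leq_trans (find_iota_size _ _) g1.
Qed.

End Gen.

Definition cdist (n s i : nat) : nat :=
  let r := i %% n in minn ((r - s) + (s - r)) (n - ((r - s) + (s - r))).

Lemma modS_cases n r : r < n -> (r.+1 < n /\ r.+1 %% n = r.+1) \/ (r.+1 = n /\ r.+1 %% n = 0).
Proof.
move=> rn; case: (ltnP r.+1 n) => h; first by left; rewrite modn_small.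
have e : r.+1 = n by lia.
by right; rewrite e modnn.
Qed.

Lemma cd_mod n s i : cdist n s (i %% n) = cdist n s i.
Proof. by rewrite /cdist modn_mod. Qed.

Lemma cd_modS n s i : cdist n s (i %% n).+1 = cdist n s i.+1.
Proof. by rewrite /cdist -addn1 modnDml addn1. Qed.

Lemma cd_addn n s i : cdist n s (i + n) = cdist n s i.
Proof. by rewrite /cdist modnDr. Qed.

Lemma cd_S n s i : 0 < n -> s < n ->
  cdist n s i.+1 <= (cdist n s i).+1 /\ cdist n s i <= (cdist n s i.+1).+1.
Proof.
move=> n0 sn; rewrite -cd_modS /cdist; set r := i %% n.
have rn : r < n by rewrite ltn_pmod.
case: (modS_cases rn) => [[_ ->]|[e ->]]; rewrite ?modn_small //; lia.
Qed.

Lemma cd_small n s i : i < n -> cdist n s i = minn ((i - s) + (s - i)) (n - ((i - s) + (s - i))).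
Proof. by move=> iin; rewrite /cdist modn_small. Qed.

Lemma cd_zero n s i : i < n -> s < n -> cdist n s i = 0 -> i = s.
Proof. move=> iin sn; rewrite cd_small //; lia. Qed.

Lemma cd_ss n s : s < n -> cdist n s s = 0.
Proof. move=> sn; rewrite cd_small //; lia. Qed.

Lemma cd_le n s i : 0 < n -> s < n -> 2 * cdist n s i <= n.
Proof. move=> n0 sn; rewrite /cdist; have := ltn_pmod i n0; lia. Qed.

Lemma cd_desc n s i : 2 < n -> i < n -> s < n -> 0 < cdist n s i ->
  (cdist n s i.+1).+1 = cdist n s i \/ (cdist n s (i + n.-1)).+1 = cdist n s i.
Proof.
move=> n3 iin sn; rewrite -(cd_mod n s i.+1) -(cd_mod n s (i + n.-1)).
case: (modS_cases iin) => [[h1 ->]|[e ->]].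
  case: (posnP i) => [->|i0].
    rewrite add0n (modn_small (m := n.-1)); last lia.
    rewrite !cd_small //; lia.
  have -> : (i + n.-1) %% n = i.-1.
    have -> : i + n.-1 = 1 * n + i.-1 by lia.
    by rewrite modnMDl modn_small //; lia.
  rewrite !cd_small //; lia.
have -> : (i + n.-1) %% n = i.-1.
  have -> : i + n.-1 = 1 * n + i.-1 by lia.
  by rewrite modnMDl modn_small //; lia.
rewrite !cd_small //; lia.
Qed.

Lemma cd_modD n s m k : cdist n s (m %% n + k) = cdist n s (m + k).
Proof. by rewrite /cdist modnDml. Qed.

Lemma cd_predS n s i : 0 < n -> cdist n s (i + n.-1).+1 = cdist n s i.
Proof. move=> n0; have -> : (i + n.-1).+1 = i + n by lia. exact: cd_addn. Qed.

Lemma pred_succ n i : i < n -> i == ((i + n.-1) %% n).+1 %% n.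
Proof.
move=> iin; rewrite -addn1 modnDml addn1.
have -> : (i + n.-1).+1 = i + n by lia.
by rewrite modnDr modn_small.
Qed.

Definition fC (n s k i : nat) : nat :=
  let t := cdist n s i in let tp := minn t (cdist n s i.+1) in
  match k with 0 => t.+2 | 1 => t.+1 | 2 => t + minn t 2
  | 3 => tp + minn tp.+1 3 | _ => tp.+2 end.

Definition fv n s (x : Uvert n) : nat := fC n s (val x.1) (val x.2).

Lemma arc_lip n s (x y : Uvert n) : 0 < n -> s < n -> Uarc x y ->
  fv s y <= (fv s x).+1 /\ fv s x <= (fv s y).+1.
Proof.
move=> n0 sn; case: x y => [[kx hkx] [i hi]] [[ky hky] [j hj]].
rewrite /Uarc /fv /=.
have h0 := @cd_S n s i n0 sn; have h1 := @cd_S n s i.+1 n0 sn.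
move=> /orP[|/orP[|/orP[|/orP[|/orP[|/orP[|/orP[|]]]]]]]
  => /and3P[/eqP ? /eqP ? /eqP ?]; subst;
  rewrite /fC /= ?cd_mod ?cd_modS; lia.
Qed.

Lemma adj_sym n (x y : Uvert n) : Uadj x y = Uadj y x.
Proof. by rewrite /Uadj orbC. Qed.

Lemma fv_desc n s (x : Uvert n) : 2 < n -> s < n -> 0 < fv s x ->
  exists y, Uadj x y /\ (fv s y).+1 = fv s x.
Proof.
move=> n3 sn; have n0 : 0 < n by lia.
case: x => [[k hk] [i hi]]; rewrite /fv /=.
have pn : (i + n.-1) %% n < n by rewrite ltn_pmod.
have sn' : i.+1 %% n < n by rewrite ltn_pmod.
have ps := pred_succ hi.
have h0 := @cd_S n s i n0 sn; have h1 := @cd_S n s i.+1 n0 sn.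
have cdp := @cd_predS n s i n0.
have Hd := @cd_desc n s i n3 hi sn.
case: k hk => [|[|[|[|[|//]]]]] hk /= fpos.
- exists (Ordinal (isT : 1 < 5), Ordinal hi).
  by rewrite /Uadj /Uarc /fv /fC /= eqxx.
- case: (posnP (cdist n s i)) => t0.
    exists (Ordinal (isT : 2 < 5), Ordinal hi).
    by rewrite /Uadj /Uarc /fv /fC /= eqxx /= t0.
  case: (Hd t0) => hd.
    exists (Ordinal (isT : 1 < 5), Ordinal sn').
    rewrite /Uadj /Uarc /fv /fC /= eqxx /= ?cd_mod; lia.
  exists (Ordinal (isT : 1 < 5), Ordinal pn).
  rewrite /Uadj /Uarc /fv /fC /= -(eqP ps) eqxx /= ?orbT ?cd_mod; lia.
- case: (leqP 2 (cdist n s i)) => t2.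
    exists (Ordinal (isT : 1 < 5), Ordinal hi).
    rewrite /Uadj /Uarc /fv /fC /= eqxx /= ?orbT; lia.
  have t0 : 0 < cdist n s i by lia.
  case: (Hd t0) => hd.
    exists (Ordinal (isT : 3 < 5), Ordinal hi).
    rewrite /Uadj /Uarc /fv /fC /= eqxx /= ?orbT; lia.
  exists (Ordinal (isT : 3 < 5), Ordinal pn).
  rewrite /Uadj /Uarc /fv /fC /= -(eqP ps) eqxx /= ?orbT ?cd_mod ?cd_modS cdp; lia.
- case: (leqP 2 (minn (cdist n s i) (cdist n s i.+1))) => t2.
    exists (Ordinal (isT : 4 < 5), Ordinal hi).
    rewrite /Uadj /Uarc /fv /fC /= eqxx /= ?orbT; lia.
  case: (leqP (cdist n s i) (cdist n s i.+1)) => tt.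
    exists (Ordinal (isT : 2 < 5), Ordinal hi).
    rewrite /Uadj /Uarc /fv /fC /= eqxx /= ?orbT; lia.
  exists (Ordinal (isT : 2 < 5), Ordinal sn').
  rewrite /Uadj /Uarc /fv /fC /= eqxx /= ?orbT ?cd_mod; lia.
- case: (leqP (minn (cdist n s i) (cdist n s i.+1)) 0) => t2.
    exists (Ordinal (isT : 3 < 5), Ordinal hi).
    rewrite /Uadj /Uarc /fv /fC /= eqxx /= ?orbT; lia.
  case: (leqP (cdist n s i) (cdist n s i.+1)) => tt.
    have t0 : 0 < cdist n s i by lia.
    case: (Hd t0) => hd; first lia.
    exists (Ordinal (isT : 4 < 5), Ordinal pn).
    rewrite /Uadj /Uarc /fv /fC /= -(eqP ps) eqxx /= ?orbT ?cd_mod ?cd_modS cdp; lia.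
  have t0 : 0 < cdist n s (i.+1 %% n) by rewrite cd_mod; lia.
  have Hd' := @cd_desc n s _ n3 sn' sn t0.
  rewrite cd_mod cd_modS cd_modD in Hd'.
  have e1 : (i.+1 + n.-1) = i + n by lia.
  rewrite e1 cd_addn in Hd'.
  case: Hd' => hd; last lia.
  exists (Ordinal (isT : 4 < 5), Ordinal sn').
  rewrite /Uadj /Uarc /fv /fC /= eqxx /= ?orbT ?cd_mod ?cd_modS; lia.
Qed.

Definition cv n s (sn : s < n) : Uvert n := (Ordinal (isT : 2 < 5), Ordinal sn).

Lemma gdist_U n s (sn : s < n) (u : Uvert n) : 2 < n ->
  gdist (@Uadj n) u (cv sn) = fv s u.
Proof.
move=> n3; have n0 : 0 < n by lia.
apply: gdist_char.
- move=> z x /orP [] h.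
    by case: (arc_lip n0 sn h).
  by case: (arc_lip n0 sn h).
- by rewrite /fv /fC /= cd_ss.
- case=> [[k hk] [i hi]]; rewrite /fv /=.
  have hz := @cd_zero n s i hi sn.
  case: k hk => [|[|[|[|[|//]]]]] hk /=; rewrite /fC; try lia.
  move=> h; have e : i = s by apply: hz; lia.
  subst i; rewrite /cv; congr (_, _); exact: val_inj.
- by move=> x; apply: fv_desc.
- move=> x; rewrite card_prod !card_ord /fv /fC.
  have := @cd_le n s x.2 n0 sn; have := @cd_le n s (x.2).+1 n0 sn.
  by case: (val x.1) => [|[|[|[|k]]]] /=; lia.
Qed.

Lemma cd_fact n s m : 0 < n -> m < n.*2 ->
  (m < n /\ cdist n s m = minn ((m - s) + (s - m)) (n - ((m - s) + (s - m)))) \/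
  (n <= m /\ cdist n s m = minn ((m - n - s) + (s - (m - n))) (n - ((m - n - s) + (s - (m - n))))).
Proof.
move=> n0 m2; case: (ltnP m n) => mn; first by left; rewrite cd_small.
right; split=> //; rewrite /cdist.
have -> : m %% n = m - n.
  have e : m = (m - n) + n by lia.
  by rewrite {1}e modnDr modn_small //; lia.
by [].
Qed.


Lemma cd0_fact n i : i < n ->
  (2*i <= n /\ cdist n 0 i = i) \/ (n <= 2*i /\ cdist n 0 i = n - i).
Proof. move=> iin; rewrite cd_small //; lia. Qed.

Lemma cds_fact n s i : i < n -> 2*s <= n <= 2*s+2 ->
  (i <= s /\ cdist n s i = s - i) \/ (s <= i /\ cdist n s i = i - s).
Proof. move=> iin h; rewrite cd_small //; lia. Qed.

Lemma cd_n n s : cdist n s n = cdist n s 0.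
Proof. by rewrite -(cd_addn n s 0) add0n. Qed.

Lemma cd_n1 n s : cdist n s n.+1 = cdist n s 1.
Proof. by rewrite -(cd_addn n s 1) add1n. Qed.

Lemma cd00 n : 0 < n -> cdist n 0 0 = 0.
Proof. by move=> n0; rewrite cd_small // minnC. Qed.
Lemma cd01 n : 1 < n -> cdist n 0 1 = 1.
Proof. move=> n0; rewrite cd_small //; lia. Qed.
Lemma cds0 n s : 2*s <= n -> 0 < n -> cdist n s 0 = s.
Proof. move=> h n0; rewrite cd_small //; lia. Qed.
Lemma cds1 n s : 2*s <= n -> 1 < n -> 0 < s -> cdist n s 1 = s - 1.
Proof. move=> h n0 s0; rewrite cd_small //; lia. Qed.

Lemma res_big n s (x y : Uvert n) : 8 < n -> s = n.-1 %/ 2 -> Uarc x y ->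
  (fv 0 x != fv 0 y) || (fv s x != fv s y).
Proof.
move=> n9 es; have n0 : 0 < n by lia.
have hs : 2*s <= n <= 2*s+2 by lia.
have s4 : 3 < s by lia.
case: x y => [[kx hkx] [i hi]] [[ky hky] [j hj]].
rewrite /Uarc /fv /=.
have a0 := @cd0_fact n i hi.
have b0 := @cds_fact n s i hi hs.
have [a1 b1] : ((2*i.+1 <= n /\ cdist n 0 i.+1 = i.+1) \/ (n <= 2*i.+1 /\ cdist n 0 i.+1 = n - i.+1)) /\
   ((i.+1 <= s /\ cdist n s i.+1 = s - i.+1) \/ (s <= i.+1 /\ i.+1 < n /\ cdist n s i.+1 = i.+1 - s) \/ (i.+1 = n /\ cdist n s i.+1 = s)).
  case: (ltnP i.+1 n) => h.
    split; [case: (@cd0_fact n i.+1 h); lia| case: (@cds_fact n s i.+1 h hs); lia].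
  have e : i.+1 = n by lia.
  rewrite e !cd_n cd00 // cds0 //; last lia.
  split; [right; split; lia | right; right; split; lia].
have [a2 b2] : ((2*i.+2 <= n /\ cdist n 0 i.+2 = i.+2) \/ (n <= 2*i.+2 /\ n <= i.+2 /\ cdist n 0 i.+2 = i.+2 - n) \/ (n <= 2*i.+2 /\ cdist n 0 i.+2 = n - i.+2)) /\
   ((i.+2 <= s /\ cdist n s i.+2 = s - i.+2) \/ (s <= i.+2 /\ i.+2 < n /\ cdist n s i.+2 = i.+2 - s) \/ (i.+2 = n /\ cdist n s i.+2 = s) \/ (i.+2 = n.+1 /\ cdist n s i.+2 = s - 1)).
  case: (ltnP i.+2 n) => h.
    split; [case: (@cd0_fact n i.+2 h) => [[? ?]|[? ?]]; lia| case: (@cds_fact n s i.+2 h hs) => [[? ?]|[? ?]]; lia].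
  case: (ltnP i.+1 n) => h'.
    have e : i.+2 = n by lia.
    rewrite e !cd_n cd00 // cds0 //; last lia.
    split; [right; right; split; lia | right; right; left; split; lia].
  have e : i.+2 = n.+1 by lia.
  rewrite e !cd_n1 cd01; last lia. have -> : cdist n s 1 = s - 1 by apply: cds1; lia.
  split; [right; left; split; lia | right; right; right; split; lia].
have hn : n = 2*s+1 \/ n = 2*s+2 by lia.
clear es hs n9 hkx hky.
move=> /orP[|/orP[|/orP[|/orP[|/orP[|/orP[|/orP[|]]]]]]]
  => /and3P[/eqP -> /eqP -> /eqP ->];
  rewrite /fC /= ?cd_mod ?cd_modS -negb_and; apply/negP => /andP[/eqP E1 /eqP E2];
  move: E1 E2 a0 b0 a1 b1 a2 b2;
  move: (cdist n 0 i) (cdist n 0 i.+1) (cdist n 0 i.+2) (cdist n s i) (cdist n s i.+1) (cdist n s i.+2) => t0 t1 t2 u0 u1 u2.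
all: move=> + + a0 b0 a1 b1 a2 b2.
(case: a0 => [[? ?]|[? ?]]; case: b0 => [[? ?]|[? ?]]; case: a1 => [[? ?]|[? ?]];
  case: b1 => [[? ?]|[[? [? ?]]|[? ?]]]; clear a2 b2; subst; lia).
(case: a0 => [[? ?]|[? ?]]; case: b0 => [[? ?]|[? ?]]; case: a1 => [[? ?]|[? ?]];
  case: b1 => [[? ?]|[[? [? ?]]|[? ?]]]; clear a2 b2; subst; lia).
(case: a0 => [[? ?]|[? ?]]; case: b0 => [[? ?]|[? ?]]; case: a1 => [[? ?]|[? ?]];
  case: b1 => [[? ?]|[[? [? ?]]|[? ?]]];
  case: a2 => [[? ?]|[[? [? ?]]|[? ?]]];
  case: b2 => [[? ?]|[[? [? ?]]|[[? ?]|[? ?]]]]; subst; lia).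
all: clear a2 b2; (case: a0 => [[? ?]|[? ?]]; case: b0 => [[? ?]|[? ?]]; case: a1 => [[? ?]|[? ?]];
  case: b1 => [[? ?]|[[? [? ?]]|[? ?]]]; subst; lia).
Qed.

Definition arcN (n kx i ky j : nat) : bool :=
  [|| [&& kx == 0, ky == 0 & j == i.+1 %% n]
    , [&& kx == 1, ky == 1 & j == i.+1 %% n]
    , [&& kx == 4, ky == 4 & j == i.+1 %% n]
    , [&& kx == 0, ky == 1 & j == i]
    , [&& kx == 1, ky == 2 & j == i]
    , [&& kx == 2, ky == 3 & j == i]
    , [&& kx == 3, ky == 4 & j == i]
    | [&& kx == 3, ky == 2 & j == i.+1 %% n]].

Lemma UarcE n (x y : Uvert n) : Uarc x y = arcN n (val x.1) (val x.2) (val y.1) (val y.2).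
Proof. by []. Qed.

Definition tf (tb : seq (seq nat)) k i := nth 0 (nth [::] tb k) i.

Definition chk n wk wi (f : nat -> nat -> nat) : bool :=
 all (fun k => all (fun i =>
   [&& f k i < 5 * n, (f k i == 0) == ((k == wk) && (i == wi)),
       all (fun k' => all (fun j => arcN n k i k' j ==>
            (f k' j <= (f k i).+1) && (f k i <= (f k' j).+1)) (iota 0 n)) (iota 0 5) &
       (f k i == 0) || has (fun k' => has (fun j =>
            (arcN n k i k' j || arcN n k' j k i) && ((f k' j).+1 == f k i)) (iota 0 n)) (iota 0 5)])
   (iota 0 n)) (iota 0 5).

Lemma chkP n wk wi f : chk n wk wi f -> forall k i, k < 5 -> i < n ->
   [&& f k i < 5 * n, (f k i == 0) == ((k == wk) && (i == wi)),
       all (fun k' => all (fun j => arcN n k i k' j ==>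
            (f k' j <= (f k i).+1) && (f k i <= (f k' j).+1)) (iota 0 n)) (iota 0 5) &
       (f k i == 0) || has (fun k' => has (fun j =>
            (arcN n k i k' j || arcN n k' j k i) && ((f k' j).+1 == f k i)) (iota 0 n)) (iota 0 5)].
Proof.
move=> /allP C k i hk hi.
have := C k; rewrite mem_iota hk => /(_ isT) /allP /(_ i).
by rewrite mem_iota hi; apply.
Qed.

Lemma table_dist n (w : Uvert n) f : chk n (val w.1) (val w.2) f ->
  forall u, gdist (@Uadj n) u w = f (val u.1) (val u.2).
Proof.
move=> C; apply: (gdist_char (f := fun x : Uvert n => f (val x.1) (val x.2))).
- move=> [[kz hz] [iz hiz]] [[kx hx] [ix hix]] /=.
  have /and4P [_ _ A1 _] := chkP C hz hiz.
  have /and4P [_ _ A2 _] := chkP C hx hix.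
  move/allP: A1 => /(_ kx); rewrite mem_iota hx => /(_ isT) /allP /(_ ix).
  rewrite mem_iota hix => /(_ isT) /implyP B1.
  move/allP: A2 => /(_ kz); rewrite mem_iota hz => /(_ isT) /allP /(_ iz).
  rewrite mem_iota hiz => /(_ isT) /implyP B2.
  rewrite /Uadj !UarcE /= => /orP [/B1|/B2] /andP [] //.
- case: w C => [[kw hw] [iw hiw]] C /=.
  have /and4P [_ /eqP E _ _] := chkP C hw hiw.
  by apply/eqP; rewrite E !eqxx.
- move=> [[kx hx] [ix hix]] /= h0.
  have /and4P [_ /eqP E _ _] := chkP C hx hix.
  move: E; rewrite h0 eqxx => /esym /andP [/eqP e1 /eqP e2].
  case: w C e1 e2 => [[kw hw] [iw hiw]] C /= e1 e2; subst.
  by congr (_, _); apply: val_inj.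
- move=> [[kx hx] [ix hix]] /= hpos.
  have /and4P [_ _ _ /orP [h0|]] := chkP C hx hix; first by rewrite (eqP h0) in hpos.
  move/hasP => [k' ]; rewrite mem_iota /= => hk' /hasP [j]; rewrite mem_iota /= => hj.
  move=> /andP [adj /eqP e].
  exists (Ordinal hk', Ordinal hj); split=> //.
- move=> [[kx hx] [ix hix]] /=; rewrite card_prod !card_ord.
  have /and4P [h _ _ _] := chkP C hx hix.
  exact: h.
Qed.

Definition rchk n (f g : nat -> nat -> nat) : bool :=
  all (fun k => all (fun i => all (fun k' => all (fun j => arcN n k i k' j ==>
     (f k i != f k' j) || (g k i != g k' j)) (iota 0 n)) (iota 0 5)) (iota 0 n)) (iota 0 5).

Lemma rchkP n f g : rchk n f g -> forall (x y : Uvert n), Uarc x y ->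
  (f (val x.1) (val x.2) != f (val y.1) (val y.2)) || (g (val x.1) (val x.2) != g (val y.1) (val y.2)).
Proof.
move=> /allP C [[kx hx] [ix hix]] [[ky hy] [iy hiy]]; rewrite UarcE /=.
move: (C kx); rewrite mem_iota hx => /(_ isT) /allP /(_ ix); rewrite mem_iota hix => /(_ isT).
move=> /allP /(_ ky); rewrite mem_iota hy => /(_ isT) /allP /(_ iy); rewrite mem_iota hiy => /(_ isT).
by move/implyP.
Qed.

Lemma res_gen n (w1 w2 : Uvert n) (F G : Uvert n -> nat) :
  (forall u, gdist (@Uadj n) u w1 = F u) -> (forall u, gdist (@Uadj n) u w2 = G u) ->
  (forall x y, Uarc x y -> (F x != F y) || (G x != G y)) ->
  local_resolving (@Uadj n) [set w1; w2].
Proof.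
move=> H1 H2 R; apply/forallP => u; apply/forallP => v; apply/implyP => /orP [h|h].
  case/orP: (R _ _ h) => d.
    by apply/existsP; exists w1; rewrite !inE eqxx /= /resolves !H1.
  by apply/existsP; exists w2; rewrite !inE eqxx orbT /= /resolves !H2.
case/orP: (R _ _ h) => d.
  by apply/existsP; exists w1; rewrite !inE eqxx /= /resolves !H1 eq_sym.
by apply/existsP; exists w2; rewrite !inE eqxx orbT /= /resolves !H2 eq_sym.
Qed.
Definition tb3_0 : seq (seq nat) := [:: [:: 2; 3; 3]; [:: 1; 2; 2]; [:: 0; 2; 2]; [:: 1; 3; 1]; [:: 2; 3; 2]].
Definition tb3_1 : seq (seq nat) := [:: [:: 1; 0; 1]; [:: 2; 1; 2]; [:: 3; 2; 3]; [:: 3; 3; 4]; [:: 4; 4; 5]].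
Definition tb4_0 : seq (seq nat) := [:: [:: 2; 3; 4; 3]; [:: 1; 2; 3; 2]; [:: 0; 2; 4; 2]; [:: 1; 3; 3; 1]; [:: 2; 3; 3; 2]].
Definition tb4_1 : seq (seq nat) := [:: [:: 1; 0; 1; 2]; [:: 2; 1; 2; 3]; [:: 3; 2; 3; 4]; [:: 3; 3; 4; 4]; [:: 4; 4; 5; 5]].
Definition tb5_0 : seq (seq nat) := [:: [:: 2; 3; 4; 4; 3]; [:: 1; 2; 3; 3; 2]; [:: 0; 2; 4; 4; 2]; [:: 1; 3; 5; 3; 1]; [:: 2; 3; 4; 3; 2]].
Definition tb5_1 : seq (seq nat) := [:: [:: 3; 2; 3; 4; 4]; [:: 2; 1; 2; 3; 3]; [:: 2; 0; 2; 4; 4]; [:: 1; 1; 3; 5; 3]; [:: 2; 2; 3; 4; 3]].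
Definition tb6_0 : seq (seq nat) := [:: [:: 2; 3; 4; 5; 4; 3]; [:: 1; 2; 3; 4; 3; 2]; [:: 0; 2; 4; 5; 4; 2]; [:: 1; 3; 5; 5; 3; 1]; [:: 2; 3; 4; 4; 3; 2]].
Definition tb6_1 : seq (seq nat) := [:: [:: 3; 2; 3; 4; 5; 4]; [:: 2; 1; 2; 3; 4; 3]; [:: 2; 0; 2; 4; 5; 4]; [:: 1; 1; 3; 5; 5; 3]; [:: 2; 2; 3; 4; 4; 3]].
Definition tb7_0 : seq (seq nat) := [:: [:: 2; 3; 4; 5; 5; 4; 3]; [:: 1; 2; 3; 4; 4; 3; 2]; [:: 0; 2; 4; 5; 5; 4; 2]; [:: 1; 3; 5; 6; 5; 3; 1]; [:: 2; 3; 4; 5; 4; 3; 2]].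
Definition tb7_1 : seq (seq nat) := [:: [:: 3; 2; 3; 4; 5; 5; 4]; [:: 2; 1; 2; 3; 4; 4; 3]; [:: 2; 0; 2; 4; 5; 5; 4]; [:: 1; 1; 3; 5; 6; 5; 3]; [:: 2; 2; 3; 4; 5; 4; 3]].
Definition tb8_0 : seq (seq nat) := [:: [:: 2; 3; 4; 5; 6; 5; 4; 3]; [:: 1; 2; 3; 4; 5; 4; 3; 2]; [:: 0; 2; 4; 5; 6; 5; 4; 2]; [:: 1; 3; 5; 6; 6; 5; 3; 1]; [:: 2; 3; 4; 5; 5; 4; 3; 2]].
Definition tb8_1 : seq (seq nat) := [:: [:: 6; 5; 4; 3; 3; 4; 5; 6]; [:: 5; 4; 3; 2; 2; 3; 4; 5]; [:: 6; 5; 3; 1; 1; 3; 5; 6]; [:: 5; 4; 2; 0; 2; 4; 5; 6]; [:: 4; 3; 2; 1; 2; 3; 4; 5]].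

Lemma bigmin_le (I : eqType) (r : seq I) (P : pred I) (F : I -> nat) x0 j :
  j \in r -> P j -> \big[minn/x0]_(i <- r | P i) F i <= F j.
Proof.
move=> + Pj; elim: r => // a r IH; rewrite inE big_cons => /orP [/eqP <-|jr].
  by rewrite Pj geq_minl.
case: (P a); last exact: IH.
exact: leq_trans (geq_minr _ _) (IH jr).
Qed.

Lemma lmd_eq2 (T : finType) (e : rel T) (W0 : {set T}) :
  2 <= #|T| -> local_resolving e W0 -> #|W0| = 2 ->
  (forall W, local_resolving e W -> 2 <= #|W|) -> lmd e = 2.
Proof.
move=> hT h0 c0 hlow; apply/eqP; rewrite eqn_leq; apply/andP; split.
  by rewrite -c0; apply: bigmin_le => //; rewrite mem_index_enum.
rewrite /lmd; elim/big_ind: _ => //.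
  by move=> x y hx hy; rewrite leq_min hx hy.
Qed.

Lemma lower_U n (W : {set Uvert n}) : 1 < n -> local_resolving (@Uadj n) W -> 2 <= #|W|.
Proof.
move=> n1 LR; rewrite leqNgt; apply/negP => cW.
have n0 : 0 < n by lia.
pose b0 : Uvert n := (Ordinal (isT : 1 < 5), Ordinal n0).
pose c0 : Uvert n := (Ordinal (isT : 2 < 5), Ordinal n0).
pose d0 : Uvert n := (Ordinal (isT : 3 < 5), Ordinal n0).
pose c1 : Uvert n := (Ordinal (isT : 2 < 5), Ordinal n1).
pose b1 : Uvert n := (Ordinal (isT : 1 < 5), Ordinal n1).
have m1 : 1 %% n = 1 by rewrite modn_small.
have ee1 : Uadj b0 c0 by rewrite /b0 /c0 /Uadj /Uarc /=.
have ee2 : Uadj c0 d0 by rewrite /d0 /c0 /Uadj /Uarc /=.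
have ee3 : Uadj d0 c1 by rewrite /d0 /c1 /Uadj /Uarc /= m1.
have ee4 : Uadj c1 b1 by rewrite /b1 /c1 /Uadj /Uarc /=.
have ee5 : Uadj b1 b0 by rewrite /b0 /b1 /Uadj /Uarc /= m1 eqxx !orbT.
move/forallP: (LR) => /(_ b0) /forallP /(_ c0) /implyP /(_ ee1) /existsP [w /andP [wW _]].
have all1 : forall x y, Uadj x y -> resolves (@Uadj n) w x y.
  move=> x y exy.
  move/forallP: (LR) => /(_ x) /forallP /(_ y) /implyP /(_ exy) /existsP [w' /andP [w'W r]].
  have := card_le1_eqP (A := W); rewrite ltnS in cW => /(_ cW) H.
  by rewrite (H w' w w'W wW).
have s1 := all1 _ _ ee1; have s2 := all1 _ _ ee2; have s3 := all1 _ _ ee3.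
have s4 := all1 _ _ ee4; have s5 := all1 _ _ ee5.
have l1 := gdist_adj w ee1; have l2 := gdist_adj w ee2; have l3 := gdist_adj w ee3.
have l4 := gdist_adj w ee4; have l5 := gdist_adj w ee5.
have sy : forall x y : Uvert n, Uadj x y -> Uadj y x by move=> x y; rewrite /Uadj orbC.
have r1 := gdist_adj w (sy _ _ ee1); have r2 := gdist_adj w (sy _ _ ee2); have r3 := gdist_adj w (sy _ _ ee3).
have r4 := gdist_adj w (sy _ _ ee4); have r5 := gdist_adj w (sy _ _ ee5).
move: s1 s2 s3 s4 s5; rewrite /resolves; lia.
Qed.

Lemma small_case n (w1 w2 : Uvert n) tb1 tb2 :
  chk n (val w1.1) (val w1.2) (tf tb1) -> chk n (val w2.1) (val w2.2) (tf tb2) ->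
  rchk n (tf tb1) (tf tb2) -> w1 != w2 ->
  exists W : {set Uvert n}, local_resolving (@Uadj n) W /\ #|W| = 2.
Proof.
move=> C1 C2 R ne; exists [set w1; w2]; split; last by rewrite cards2 ne.
apply: (res_gen (table_dist C1) (table_dist C2)).
by move=> x y; apply: rchkP.
Qed.

Lemma upper n : 2 < n -> exists W : {set Uvert n}, local_resolving (@Uadj n) W /\ #|W| = 2.
Proof.
move=> n3; case: (ltnP 8 n) => n9.
  have n0 : 0 < n by lia.
  set s := n.-1 %/ 2.
  have sn : s < n by rewrite /s; lia.
  exists [set cv n0; cv sn]; split.
    apply: (res_gen (fun u => gdist_U n0 u n3) (fun u => gdist_U sn u n3)).
    by move=> x y h; apply: res_big.
  rewrite cards2; suff -> : (cv n0 != cv sn) by []. apply/negP => /eqP H.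
  have := f_equal (fun x : Uvert n => val x.2) H; rewrite /= /s; lia.
have : (n == 3) || (n == 4) || (n == 5) || (n == 6) || (n == 7) || (n == 8) by lia.
move=> /orP[/orP[/orP[/orP[/orP[|]|]|]|]|] /eqP ->.
- by apply: (@small_case 3 (Ordinal (isT : 2 < 5), Ordinal (isT : 0 < 3)) (Ordinal (isT : 0 < 5), Ordinal (isT : 1 < 3)) tb3_0 tb3_1); vm_compute; reflexivity.
- by apply: (@small_case 4 (Ordinal (isT : 2 < 5), Ordinal (isT : 0 < 4)) (Ordinal (isT : 0 < 5), Ordinal (isT : 1 < 4)) tb4_0 tb4_1); vm_compute; reflexivity.
- by apply: (@small_case 5 (Ordinal (isT : 2 < 5), Ordinal (isT : 0 < 5)) (Ordinal (isT : 2 < 5), Ordinal (isT : 1 < 5)) tb5_0 tb5_1); vm_compute; reflexivity.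
- by apply: (@small_case 6 (Ordinal (isT : 2 < 5), Ordinal (isT : 0 < 6)) (Ordinal (isT : 2 < 5), Ordinal (isT : 1 < 6)) tb6_0 tb6_1); vm_compute; reflexivity.
- by apply: (@small_case 7 (Ordinal (isT : 2 < 5), Ordinal (isT : 0 < 7)) (Ordinal (isT : 2 < 5), Ordinal (isT : 1 < 7)) tb7_0 tb7_1); vm_compute; reflexivity.
- by apply: (@small_case 8 (Ordinal (isT : 2 < 5), Ordinal (isT : 0 < 8)) (Ordinal (isT : 3 < 5), Ordinal (isT : 3 < 8)) tb8_0 tb8_1); vm_compute; reflexivity.
Qed.

Theorem theorem4p1 (n : nat) : 3 <= n -> lmd (@Uadj n) = 2.
Proof.
move=> n3; have [W0 [h0 c0]] := upper n3.
apply: (lmd_eq2 _ h0 c0).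
  by rewrite card_prod !card_ord; lia.
by move=> W; apply: lower_U; lia.
Qed.
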